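(* Let $N$ be a finite set of bidders with nonnegative bids, and for $T\subseteq N$ let $R(T)$ be the second-highest bid in $T$ ($0$ if $|T|\le 1$). Let $\mathbf{A}$ be the $n\times n$ matrix ($n=|N|$) with first column $0$, second column $(\tfrac12,\tfrac12,0,\dots,0)^T$, and, for $3\le j\le n$, $j$-th column with entries $-\frac{1}{j(j-1)}$ in rows $1,\dots,j-1$, $\frac1j$ in row $j$, and $0$ below. Let $\mathbf{b}$ be the vector of bids of $N$ sorted in decreasing order, and let the attribution of the bidder in sorted position $k$ be $(\mathbf{A}\mathbf{b})_k$. Then for each bidder $i\in N$ (with ties among equal bids broken arbitrarily in the sorting), its attribution equals its Shapley value in the cooperative game $(N,R)$: $$\sum_{T\subseteq N\setminus\{i\}} \frac{|T|!\,(|N|-|T|-1)!}{|N|!}\bigl(R(T\cup\{i\})-R(T)\bigr).$$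
   Context: The attribution $\mathbf{A}\mathbf{b}$ is the linear revenue attribution used by the paper's ''Shapley's linear heuristic'' for second-price auctions; $R$ is viewed as a characteristic function on subsets of bidders. *)

(* Defs.v *)
From HB Require Import structures.
From mathcomp Require Import all_boot all_order all_algebra all_fingroup.
Set Implicit Arguments. Unset Strict Implicit. Unset Printing Implicit Defensive.
Import Order.TTheory GRing.Theory Num.Theory.
Local Open Scope ring_scope.

(* R(T): second-highest bid in T, i.e. the element at index 1 (0-based) of the
   bids of T sorted in decreasing order; 0 if |T| <= 1. *)
Definition secondHighest (R : realFieldType) (n : nat) (b : 'I_n -> R)
  (T : {set 'I_n}) : R :=
  nth 0 (sort (fun x y : R => y <= x) [seq b j | j <- enum T]) 1.

(* The matrix A, 0-based indices: column 0 is zero; column 1 is (1/2,1/2,0,..);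
   column j >= 2 (paper's j+1 >= 3) has -1/((j+1) j) in rows < j, 1/(j+1) in row j,
   0 below. *)
Definition attrMatrix (R : realFieldType) (n : nat) : 'M[R]_n :=
  \matrix_(i < n, j < n)
    if (j == 0%N :> nat) then 0
    else if (j == 1%N :> nat) then (if (i <= 1)%N then 2%:R^-1 else 0)
    else if (i < j)%N then - ((j.+1 * j)%N%:R)^-1
    else if (i == j :> nat) then (j.+1)%:R^-1
    else 0.

Definition shapley (R : realFieldType) (n : nat) (v : {set 'I_n} -> R)
  (i : 'I_n) : R :=
  \sum_(T : {set 'I_n} | T \subset ~: [set i])
     ((#|T| `! * (n - #|T| - 1) `!)%N%:R / (n `!)%:R) * (v (i |: T) - v T).

(* Main.v *)
Require Import Defs.
From HB Require Import structures.
From mathcomp Require Import all_boot all_order all_algebra all_fingroup.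
From mathcomp Require Import ring lra zify.
Import Order.TTheory GRing.Theory Num.Theory.
Local Open Scope ring_scope.

Definition wt (R : realFieldType) (n t : nat) : R :=
  ((t `! * (n - t - 1) `!)%N%:R / (n `!)%:R).

Lemma sub_notin (n : nat) (i : 'I_n) (T : {set 'I_n}) :
  (T \subset ~: [set i]) = (i \notin T).
Proof. by rewrite subsetC sub1set in_setC. Qed.

Lemma shapleyE (R : realFieldType) (n : nat) (v : {set 'I_n} -> R) (i : 'I_n) :
  shapley v i = \sum_(T : {set 'I_n} | i \notin T) wt R n #|T| * (v (i |: T) - v T).
Proof. by apply: eq_bigl => T; rewrite sub_notin. Qed.

Lemma shapley_sum (R : realFieldType) (n m : nat) (a : 'I_m -> R)
   (v : 'I_m -> {set 'I_n} -> R) (i : 'I_n) :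
  shapley (fun T => \sum_(k < m) a k * v k T) i = \sum_(k < m) a k * shapley (v k) i.
Proof.
rewrite /shapley.
under eq_bigr => T _ do rewrite -sumrB mulr_sumr.
rewrite exchange_big /=; apply: eq_bigr => k _.
rewrite mulr_sumr; apply: eq_bigr => T _.
by rewrite -mulrBr mulrCA.
Qed.

Lemma shapley_sub (R : realFieldType) (n : nat) (v u : {set 'I_n} -> R) (i : 'I_n) :
  shapley (fun T => v T - u T) i = shapley v i - shapley u i.
Proof.
rewrite /shapley -sumrB; apply: eq_bigr => T _.
by rewrite -mulrBr; congr (_ * _); ring.
Qed.

Lemma shapley_dummy (R : realFieldType) (n : nat) (v : {set 'I_n} -> R) (i : 'I_n) :
  (forall T : {set 'I_n}, v (i |: T) = v T) -> shapley v i = 0.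
Proof. by move=> h; rewrite /shapley big1 // => T _; rewrite h subrr mulr0. Qed.

Lemma shapley_sym (R : realFieldType) (n : nat) (v : {set 'I_n} -> R)
  (p : {perm 'I_n}) (i : 'I_n) :
  (forall T : {set 'I_n}, v (p @: T) = v T) -> shapley v (p i) = shapley v i.
Proof.
move=> h; rewrite !shapleyE.
rewrite (reindex_inj (h := fun T : {set 'I_n} => p @: T)); last first.
  by apply: imset_inj; apply: perm_inj.
apply: eq_big => [T|T _] /=; first by rewrite mem_imset //; apply: perm_inj.
rewrite card_imset; last by apply: perm_inj.
by rewrite -imsetU1 !h.
Qed.


Lemma reindexU1 (R : realFieldType) (n : nat) (i : 'I_n) (F : {set 'I_n} -> R) :
  \sum_(T : {set 'I_n} | i \notin T) wt R n #|T| * F (i |: T)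
  = \sum_(S : {set 'I_n} | i \in S) wt R n (#|S| - 1) * F S.
Proof.
symmetry.
rewrite (reindex_onto (fun T : {set 'I_n} => i |: T) (fun S => S :\ i)); last first.
  by move=> S hS; rewrite setD1K.
apply: eq_big => [T|T hT].
  rewrite setU11 /=; case: (boolP (i \in T)) => hi /=.
    apply/negbTE; apply/eqP => e.
    by have := setD11 i (i |: T); rewrite e hi.
  by rewrite setU1K // eqxx.
move: hT => /andP[_ /eqP e]; have hi : i \notin T by rewrite -e setD11.
by rewrite cardsU1 hi add1n subn1.
Qed.

Lemma exch (R : realFieldType) (n : nat) (P : 'I_n -> {set 'I_n} -> bool)
   (F : {set 'I_n} -> R) :
  \sum_(i : 'I_n) \sum_(T : {set 'I_n} | P i T) F T
  = \sum_(T : {set 'I_n}) F T *+ #|[set i | P i T]|.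
Proof.
rewrite (exchange_big_dep xpredT) //=; apply: eq_bigr => T _.
rewrite -sumr_const; apply: eq_bigl => i; by rewrite inE.
Qed.

Lemma key (R : realFieldType) (n : nat) (v : {set 'I_n} -> R) (n0 : (0 < n)%N) (S : {set 'I_n}) :
   (wt R n (#|S| - 1) * v S) *+ #|S| -
   (wt R n #|S| * v S) *+ (n - #|S|)
   = (S == setT)%:R * v S - (S == set0)%:R * v S.
Proof.
  rewrite -[X in X - _]mulr_natl -[X in _ - X]mulr_natl /wt !mulrA -!natrM.
  have sn : (#|S| <= n)%N by have := max_card (mem S); rewrite card_ord.
  have fn : (n `!)%:R != 0 :> R by rewrite pnatr_eq0 -lt0n fact_gt0.
  case: (boolP (S == set0)) => [/eqP -> | S0].
    rewrite cards0 (_ : set0 == setT = false); last first.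
      apply/negbTE/eqP => e; have := cardsT 'I_n; rewrite -e cards0 card_ord.
      by move=> h; rewrite -h in n0.
    rewrite /= mul0n mul0r subn0 fact0 mul1n.
    rewrite (_ : (n * (n-1)`!)%N = n`!); last first.
      by move: n0; case: (n) => // m _; rewrite subn1 /= factS.
    by rewrite mulfV // !mul0r mul1r.
  case: (boolP (S == setT)) => [/eqP -> | ST].
    have setT0 : ([set: 'I_n] == set0) = false.
      by apply/negbTE; move: S0; apply: contra => /eqP e; rewrite -subset0 -e subsetT.
    rewrite cardsT card_ord subnn mul0n.
    rewrite (_ : (n * ((n-1)`! * (n - (n-1) - 1)`!))%N = n`!); last first.
      by move: n0; case: (n) => // m _; rewrite subn1 /= subSn // subnn fact0 muln1 factS.
    rewrite mulfV // /= mul0r mul1r !mul0r subr0; done.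
  rewrite !mul0r subrr.
  have s0 : (0 < #|S|)%N by rewrite lt0n cards_eq0.
  have sn' : (#|S| < n)%N.
    rewrite ltn_neqAle sn andbT; apply/negP => /eqP e; move/negP: ST; apply.
    by rewrite eqEcard subsetT /= cardsT card_ord e leqnn.
  apply/eqP; rewrite subr_eq0; apply/eqP; congr (_ * _ * _); congr (_%:R).
  case: #|S| s0 sn' => // s _ hs.
  rewrite subn1 /= (_ : (n - s - 1 = n - s.+1)%N); last by lia.
  rewrite (_ : (n - s.+1 = (n - s.+2).+1)%N); last by lia.
  rewrite !factS; rewrite (_ : (n - s.+2).+1 - 1 = n - s.+2)%N; last by lia.
  ring.
Qed.

Lemma shapley_eff (R : realFieldType) (n : nat) (v : {set 'I_n} -> R) :
  (0 < n)%N -> \sum_(i : 'I_n) shapley v i = v setT - v set0.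
Proof.
move=> n0.
under eq_bigr => i _ do rewrite shapleyE.
have sp : forall i : 'I_n, \sum_(T : {set 'I_n} | i \notin T) wt R n #|T| * (v (i |: T) - v T)
   = \sum_(T : {set 'I_n} | i \notin T) wt R n #|T| * v (i |: T)
     - \sum_(T : {set 'I_n} | i \notin T) wt R n #|T| * v T.
  by move=> i; rewrite -sumrB; apply: eq_bigr => T _; rewrite mulrBr.
under eq_bigr => i _ do rewrite sp.
rewrite sumrB.
under eq_bigr => i _ do rewrite reindexU1.
rewrite !exch.
rewrite -sumrB.
have cT : forall S : {set 'I_n}, #|[set i | i \in S]| = #|S|.
  by move=> S; apply: eq_card => x; rewrite inE.
have cC : forall S : {set 'I_n}, #|[set i | i \notin S]| = (n - #|S|)%N.
  move=> S; have h := cardsC S; rewrite card_ord in h.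
  rewrite (_ : (n - #|S|)%N = #|~: S|); last by lia.
  by apply: eq_card => x; rewrite !inE.
under eq_bigr => S _ do rewrite cT cC (@key R n v n0).
rewrite sumrB (bigD1 setT) //= big1 ?addr0; last first.
  by move=> S /negbTE ->; rewrite mul0r.
rewrite (bigD1 set0) //= big1 ?addr0; last first.
  by move=> S /negbTE ->; rewrite mul0r.
by rewrite !eqxx !mul1r.
Qed.


Definition Sk (n : nat) (s : 'S_n) (k : nat) : {set 'I_n} :=
  [set j | ((s^-1)%g j <= k)%N].
Arguments Sk {n}.

Definition U (R : realFieldType) (n : nat) (s : 'S_n) (k : nat) (T : {set 'I_n}) : R :=
  (1 < #|T :&: Sk s k|)%N%:R.
Arguments U R {n}.

Lemma card_le (n k : nat) : (k < n)%N -> #|[set l : 'I_n | (l <= k)%N]| = k.+1.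
Proof.
move=> h.
have -> : [set l : 'I_n | (l <= k)%N] = [set widen_ord h x | x : 'I_k.+1].
  apply/setP => l; rewrite !inE; apply/idP/imsetP => [hl|[x _ ->]] /=.
    by exists (Ordinal (hl : (l < k.+1)%N)) => //; apply: val_inj.
  by rewrite -ltnS.
rewrite card_imset ?card_ord // => x y /(congr1 val) /= e; exact: ord_inj e.
Qed.

Lemma card_Sk (n : nat) (s : 'S_n) k : (k < n)%N -> #|Sk s k| = k.+1.
Proof.
move=> h; rewrite -(@card_le n k h) -(card_preimset _ (@perm_inj _ s)).
by apply: eq_card => x; rewrite !inE permK.
Qed.

Lemma U_dummy (R : realFieldType) (n : nat) (s : 'S_n) k (i : 'I_n) T :
  i \notin Sk s k -> U R s k (i |: T) = U R s k T.
Proof.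
move=> hi; rewrite /U; congr (_ %:R); congr (_ < _)%N; apply: eq_card => x.
rewrite !inE; case: eqP => // -> /=; move: hi; rewrite inE => /negbTE ->.
by rewrite andbF.
Qed.

Lemma shapley_U (R : realFieldType) (n : nat) (s : 'S_n) k (i : 'I_n) :
  (k < n)%N ->
  shapley (U R s k) i = if (0 < k)%N && ((s^-1)%g i <= k)%N then (k.+1)%:R^-1 else 0.
Proof.
move=> kn.
case: (boolP ((s^-1)%g i <= k)%N) => hik; last first.
  rewrite andbF; apply: shapley_dummy => T; apply: U_dummy; by rewrite inE.
case: k kn hik => [|k] kn hik /=.
  apply: shapley_dummy => T.
  have z : forall T', U R s 0 T' = 0.
    move=> T'; rewrite /U; suff -> : (1 < #|T' :&: Sk s 0|)%N = false by [].
    apply/negbTE; rewrite -leqNgt; apply: leq_trans (subset_leq_card (subsetIr _ _)) _.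
    by rewrite card_Sk.
  by rewrite !z.
have hiS : i \in Sk s k.+1 by rewrite inE.
have sym : forall j, j \in Sk s k.+1 -> shapley (U R s k.+1) j = shapley (U R s k.+1) i.
  move=> j hj; rewrite -{1}(tpermL i j); apply: shapley_sym => T.
  rewrite /U; congr (_ %:R); congr (_ < _)%N.
  have pS : [set tperm i j x | x in Sk s k.+1] = Sk s k.+1.
    apply/eqP; rewrite eqEcard card_imset; last by apply: perm_inj.
    rewrite leqnn andbT; apply/subsetP => y /imsetP[x hx ->].
    by case: tpermP.
  rewrite -{1}pS -imsetI; last by move=> x y _ _; apply: perm_inj.
  by rewrite card_imset //; apply: perm_inj.
have eff := @shapley_eff R n (U R s k.+1) (leq_ltn_trans (leq0n _) kn).
rewrite (bigID (fun j => j \in Sk s k.+1)) /= in eff.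
rewrite (eq_bigr (fun _ => shapley (U R s k.+1) i)) in eff; last by move=> j hj; apply: sym.
rewrite [X in _ + X]big1 ?addr0 in eff; last first.
  by move=> j hj; apply: shapley_dummy => T; apply: U_dummy.
rewrite sumr_const card_Sk // /U setTI card_Sk // set0I cards0 /= in eff.
apply: (@mulfI _ (k.+2)%:R); first by rewrite pnatr_eq0.
by rewrite mulfV ?pnatr_eq0 // mulr_natl eff subr0.
Qed.


Definition E (R : realFieldType) (n : nat) (s : 'S_n) (k : nat) (T : {set 'I_n}) : R :=
  U R s k T - (if k is k'.+1 then U R s k' T else 0).
Arguments E R {n}.

Lemma cnt2 (n : nat) (a c : 'I_n) r k :
  sorted (fun x y : 'I_n => (x < y)%N) [:: a, c & r] ->
  (1 < count (fun l : 'I_n => (l <= k)%N) [:: a, c & r])%N = (c <= k)%N.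
Proof.
move=> /= /andP[ac pc].
have al : all (fun y : 'I_n => (c < y)%N) r.
  by apply: order_path_min pc => x y z; apply: ltn_trans.
case: (leqP c k) => ck /=.
  by rewrite (leq_trans (ltnW ac) ck).
have -> : count (fun l : 'I_n => (l <= k)%N) r = 0%N.
  apply/eqP; rewrite -leqn0 leqNgt -has_count; apply/hasPn => x /(allP al) cx.
  by rewrite -ltnNge (ltn_trans ck cx).
by rewrite addn0; case: (a <= k)%N.
Qed.

Lemma decomp (R : realFieldType) (n : nat) (b : 'I_n -> R) (s : 'S_n)
  (sorted_s : forall k l : 'I_n, (k <= l)%N -> b (s l) <= b (s k)) (T : {set 'I_n}) :
  secondHighest b T = \sum_(k < n) b (s k) * E R s k T.
Proof.
pose P := [seq k <- enum 'I_n | s k \in T].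
have srtE : sorted (fun x y : 'I_n => (x < y)%N) (enum 'I_n).
  have : sorted ltn [seq val i | i <- enum 'I_n] by rewrite val_enum_ord iota_ltn_sorted.
  by rewrite sorted_map.
have srtP : sorted (fun x y : 'I_n => (x < y)%N) P.
  by apply: sorted_filter => // x y z; apply: ltn_trans.
have cnt : forall k, #|T :&: Sk s k| = count (fun l : 'I_n => (l <= k)%N) P.
  move=> k; rewrite -(card_preimset _ (@perm_inj _ s)) cardE /enum_mem size_filter.
  rewrite /P enumT count_filter; apply: eq_count => x; rewrite !inE permK /=.
  by rewrite andbC.
have pe : perm_eq [seq b (s k) | k <- P] [seq b j | j <- enum T].
  have -> : [seq b (s k) | k <- P] = [seq b j | j <- [seq s k | k <- P]] by rewrite -map_comp.
  apply: perm_map.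
  apply: uniq_perm.
  - rewrite map_inj_uniq; [apply: filter_uniq; apply: enum_uniq | apply: perm_inj].
  - by apply: enum_uniq.
  move=> x; rewrite -{1}(permKV s x) mem_map; last by apply: perm_inj.
  by rewrite /P mem_filter !mem_enum permKV andbT.
have srt : sorted (fun x y : R => y <= x) [seq b (s k) | k <- P].
  apply: (homo_sorted (e := fun x y : 'I_n => (x < y)%N)) => // x y xy.
  by apply: sorted_s; apply: ltnW.
have sE : sort (fun x y : R => y <= x) [seq b j | j <- enum T] = [seq b (s k) | k <- P].
  apply: (@sorted_eq _ (fun x y : R => y <= x)).
  - by move=> y x z h1 h2; apply: le_trans h2 h1.
  - by move=> x y /andP[h1 h2]; apply/eqP; rewrite eq_le h1 h2.
  - by apply: sort_sorted => x y; apply: le_total.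
  - exact: srt.
  by rewrite perm_sort perm_sym.
rewrite /secondHighest sE.
have UE : forall k, U R s k T = (1 < count (fun l : 'I_n => (l <= k)%N) P)%N%:R.
  by move=> k; rewrite /U cnt.
clear cnt pe srt sE; move: srtP UE; rewrite /P; case: (filter _ _) => [|a [|c r]] srtP UE /=.
- rewrite big1 // => k _.
  suff -> : forall m, E R s m T = 0 by rewrite mulr0.
  by case=> [|m]; rewrite /E !UE /= ?subrr.
- rewrite big1 // => k _.
  suff -> : forall m, E R s m T = 0 by rewrite mulr0.
  have h : forall m, (1 < (a <= m)%N + 0)%N = false by move=> m; case: (a <= m)%N.
  by case=> [|m]; rewrite /E !UE /= !h ?subrr ?subr0.
have EE : forall k : nat, E R s k T = ((k : nat) == c)%:R.
  case=> [|m]; rewrite /E !UE !cnt2 //=.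
    by rewrite subr0 leqn0; case: (c : nat).
  case: (ltngtP c m.+1) => h.
  - by rewrite -ltnS h subrr.
  - by rewrite leqNgt (ltn_trans (ltnSn m) h) subrr.
  - by rewrite h ltnn subr0.
rewrite (bigD1 c) //= big1 ?addr0 ?EE ?eqxx ?mulr1 // => k kc.
by rewrite EE (_ : (k : nat) == c = false) ?mulr0 //; apply/negbTE.
Qed.


Definition dd (R : realFieldType) (p m : nat) : R :=
  if (0 < m)%N && (p <= m)%N then (m.+1)%:R^-1 else 0.

Lemma shapley_ext (R : realFieldType) (n : nat) (v u : {set 'I_n} -> R) (i : 'I_n) :
  (forall T, v T = u T) -> shapley v i = shapley u i.
Proof. by move=> h; apply: eq_bigr => T _; rewrite !h. Qed.

Lemma shapley_E (R : realFieldType) (n : nat) (s : 'S_n) (k : nat) (i : 'I_n) :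
  (k < n)%N ->
  shapley (E R s k) i = dd R ((s^-1)%g i) k - (if k is k'.+1 then dd R ((s^-1)%g i) k' else 0).
Proof.
move=> kn; case: k kn => [|k] kn.
  rewrite (@shapley_ext R n _ (fun T => U R s 0 T - (fun _ => 0) T)) //.
  rewrite shapley_sub shapley_U // (@shapley_dummy R n (fun _ => 0)) //.
rewrite (@shapley_ext R n _ (fun T => U R s k.+1 T - U R s k T)) //.
by rewrite shapley_sub !shapley_U // ltnW.
Qed.

Lemma entry (R : realFieldType) (n : nat) (p j : 'I_n) :
  attrMatrix R n p j = dd R p j - (if (j : nat) is j'.+1 then dd R p j' else 0).
Proof.
rewrite /attrMatrix mxE /dd.
case: (nat_of_ord j) => [|[|m]] /=.
- by rewrite subr0.
- by case: (p <= 1)%N; rewrite subr0.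
case: (ltngtP p m.+2) => h.
- rewrite -ltnS h.
  have hm : 0 <= m%:R :> R := ler0n _ _.
  rewrite natrM; field; apply/andP; split; apply/eqP; lra.
- by rewrite leqNgt (ltn_trans (ltnSn _) h) /= subr0.
- by rewrite h leqNgt ltnSn /= subr0.
Qed.


Theorem mainTheorem4 (R : realFieldType) (n : nat) (b : 'I_n -> R)
  (b_nonneg : forall i, 0 <= b i)
  (sigma : 'S_n)
  (sorted_sigma : forall k l : 'I_n, (k <= l)%N -> b (sigma l) <= b (sigma k)) :
  forall i : 'I_n,
    (attrMatrix R n *m (\col_k b (sigma k))) ((sigma^-1)%g i) 0
    = shapley (secondHighest b) i.
Proof.
move=> i.
rewrite mxE.
rewrite (@shapley_ext R n _ (fun T => \sum_(k < n) b (sigma k) * E R sigma k T)); last first.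
  by move=> T; apply: decomp.
rewrite (@shapley_sum R n n (fun k => b (sigma k)) (fun k => E R sigma k) i).
apply: eq_bigr => k _.
by rewrite entry mxE shapley_E // mulrC.
Qed.
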